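(* Let $\boldsymbol{\tau} \colon \mathsf{BPT} \to \mathbb K$ be a weighted troupe. For $n \geq 1$, let \[\omega_n = \sum_{T \in \mathsf{Branch}_n} \boldsymbol{\tau}(T)\quad\text{and}\quad\check{\omega}_n = \sum_{T \in \mathsf{BPT}_n} \boldsymbol{\tau}(T).\] Let \[\mathscr B(t) = \sum_{n \geq 1} \omega_n t^n\quad\text{and}\quad \mathscr T(t) = \sum_{n \geq 1} \check{\omega}_n t^n.\] Then $\mathscr B(t)$ is algebraic over $\mathbb K[t]$ if and only if $\mathscr T(t)$ is.
   Context: $\mathbb K$ is a commutative ring. $\mathsf{BPT}$ is the set of binary plane trees (rooted trees where each child is designated left or right, each vertex having at most one left and one right child), including the empty tree $\varnothing$; $\mathsf{BPT}_n$ is the set of those with $n$ vertices. A branch is a nonempty binary plane tree in which every vertex has at most one child; $\mathsf{Branch}_n$ is the set of branches with $n$ vertices. For nonempty binary plane trees $T_1,T_2$ and a vertex $v$ of $T_1$, the insertion $\nabla_v(T_1,T_2)$ is obtained by extending $v$ into a left edge (identifying $v$ with the bottom vertex and calling the new upper vertex $v^*$) and attaching $T_2$ as the right subtree of $v^*$. A weighted troupe is a function $\boldsymbol{\tau}\colon\mathsf{BPT}\to\mathbb K$ with $\boldsymbol{\tau}(\varnothing)=0$ and $\boldsymbol{\tau}(\nabla_v(T_1,T_2))=\boldsymbol{\tau}(T_1)\boldsymbol{\tau}(T_2)$ for all $T_1,T_2$ and all vertices $v\in T_1$. It is known (previous theorem) that $\mathscr T(t) = \mathscr B\left(\frac{t}{1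 - t\mathscr T(t)}\right)$. *)

(* Defs.v *)
From HB Require Import structures.
From mathcomp Require Import all_boot all_order all_algebra.
Set Implicit Arguments. Unset Strict Implicit. Unset Printing Implicit Defensive.
Import GRing.Theory.
Local Open Scope ring_scope.

(** Binary plane trees: [Leaf] is the empty tree; [Node l r] is a root with
    left subtree [l] and right subtree [r] (empty subtree = no child). *)
Inductive bpt : Type := Leaf | Node of bpt & bpt.

Fixpoint bsize (t : bpt) : nat :=
  match t with Leaf => 0%N | Node l r => (bsize l + bsize r).+1 end.

Fixpoint is_branch (t : bpt) : bool :=
  match t with
  | Leaf => false
  | Node Leaf Leaf => true
  | Node l Leaf => is_branch l
  | Node Leaf r => is_branch r
  | Node _ _ => false
  end.

(** [ins T2 T1 T] : T = nabla_v(T1, T2) for some vertex v of T1.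
    The subtree S rooted at v is replaced by a new vertex v* whose left
    subtree is S (rooted at v) and whose right subtree is T2. *)
Inductive ins (T2 : bpt) : bpt -> bpt -> Prop :=
| ins_here l r : ins T2 (Node l r) (Node (Node l r) T2)
| ins_left l r l' : ins T2 l l' -> ins T2 (Node l r) (Node l' r)
| ins_right l r r' : ins T2 r r' -> ins T2 (Node l r) (Node l r').

Definition weighted_troupe (K : comNzRingType) (tau : bpt -> K) : Prop :=
  tau Leaf = 0 /\
  forall T1 T2 T, T1 <> Leaf -> T2 <> Leaf -> ins T2 T1 T ->
    tau T = tau T1 * tau T2.

Fixpoint trees_upto (h : nat) : seq bpt :=
  match h with
  | 0%N => [:: Leaf]
  | h'.+1 => Leaf :: [seq Node l r | l <- trees_upto h', r <- trees_upto h']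
  end.

(** BPT_n, listed without repetition (a tree with n vertices has height <= n). *)
Definition BPT_n (n : nat) : seq bpt := [seq t <- trees_upto n | bsize t == n].
Definition Branch_n (n : nat) : seq bpt := [seq t <- BPT_n n | is_branch t].

Definition omega (K : comNzRingType) (tau : bpt -> K) (n : nat) : K :=
  \sum_(T <- Branch_n n) tau T.
Definition omega_check (K : comNzRingType) (tau : bpt -> K) (n : nat) : K :=
  \sum_(T <- BPT_n n) tau T.

Definition fps (K : comNzRingType) := nat -> K.

Definition fps_mul (K : comNzRingType) (f g : fps K) : fps K :=
  fun n => \sum_(i < n.+1) f i * g (n - i)%N.
Definition fps_one (K : comNzRingType) : fps K := fun n => if n == 0%N then 1 else 0.
Definition fps_exp (K : comNzRingType) (f : fps K) (k : nat) : fps K :=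
  iter k (fps_mul f) (@fps_one K).
Definition fps_of_poly (K : comNzRingType) (p : {poly K}) : fps K := fun n => p`_n.

(** Evaluation of P(t, y) in K[t][y] at y = f, as a power series. *)
Definition fps_eval (K : comNzRingType) (P : {poly {poly K}}) (f : fps K) : fps K :=
  fun n => \sum_(i < size P) fps_mul (fps_of_poly P`_i) (fps_exp f i) n.

Definition fps_algebraic (K : comNzRingType) (f : fps K) : Prop :=
  exists P : {poly {poly K}}, P != 0 /\ forall n, fps_eval P f n = 0.

Definition seriesB (K : comNzRingType) (tau : bpt -> K) : fps K :=
  fun n => if n == 0%N then 0 else omega tau n.
Definition seriesT (K : comNzRingType) (tau : bpt -> K) : fps K :=
  fun n => if n == 0%N then 0 else omega_check tau n.

(* Main.v *)
From HB Require Import structures.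
Require Import Defs.
From mathcomp Require Import all_boot all_order all_algebra.
From mathcomp Require Import boolp zify ring.
From Stdlib Require Import FunctionalExtensionality.
Set Implicit Arguments. Unset Strict Implicit. Unset Printing Implicit Defensive.
Import GRing.Theory.
Local Open Scope ring_scope.

Section Ser.
Variable K : comNzRingType.
Definition ser := nat -> K.
HB.instance Definition _ := gen_eqMixin ser.
HB.instance Definition _ := gen_choiceMixin ser.

Definition sadd (f g : ser) : ser := fun n => f n + g n.
Definition sopp (f : ser) : ser := fun n => - f n.
Definition szero : ser := fun _ => 0.
Definition smul (f g : ser) : ser := fps_mul f g.
Definition sone : ser := @fps_one K.

Lemma saddA : associative sadd.
Proof. by move=> f g h; apply: functional_extensionality => n; rewrite /sadd addrA. Qed.
Lemma saddC : commutative sadd.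
Proof. by move=> f g; apply: functional_extensionality => n; rewrite /sadd addrC. Qed.
Lemma sadd0 : left_id szero sadd.
Proof. by move=> f; apply: functional_extensionality => n; rewrite /sadd /szero add0r. Qed.
Lemma saddN : left_inverse szero sopp sadd.
Proof. by move=> f; apply: functional_extensionality => n; rewrite /sadd /sopp /szero addNr. Qed.

HB.instance Definition _ := GRing.isZmodule.Build ser saddA saddC sadd0 saddN.

Definition tr (N : nat) (f : ser) : {poly K} := \poly_(i < N) f i.

Lemma coefM_loc (p q p' q' : {poly K}) n :
  (forall i, (i <= n)%N -> p`_i = p'`_i) -> (forall i, (i <= n)%N -> q`_i = q'`_i) ->
  (p * q)`_n = (p' * q')`_n.
Proof.
move=> Hp Hq; rewrite !coefM; apply: eq_bigr => i _.
by rewrite Hp ?Hq // ?leq_subr // -ltnS.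
Qed.

Lemma mulE N (f g : ser) n : (n < N)%N -> smul f g n = (tr N f * tr N g)`_n.
Proof.
move=> nN; rewrite coefM /smul /fps_mul; apply: eq_bigr => i _.
rewrite /tr !coef_poly; have iN : (i < N)%N by apply: leq_ltn_trans nN; rewrite -ltnS.
by rewrite iN (leq_ltn_trans (leq_subr _ _) nN).
Qed.

Lemma smulA : associative smul.
Proof.
move=> f g h; apply: functional_extensionality => n.
rewrite (mulE f _ (ltnSn n)) (mulE _ h (ltnSn n)).
transitivity ((tr n.+1 f * (tr n.+1 g * tr n.+1 h))`_n); last rewrite mulrA.
  apply: coefM_loc => // i ilen.
  have iN : (i < n.+1)%N by rewrite ltnS.
  by rewrite /tr coef_poly iN (mulE _ _ iN).
apply: coefM_loc => // i ilen.
have iN : (i < n.+1)%N by rewrite ltnS.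
by rewrite /tr coef_poly iN (mulE _ _ iN).
Qed.
Lemma smulC : commutative smul.
Proof.
move=> f g; apply: functional_extensionality => n.
by rewrite (mulE f g (ltnSn n)) (mulE g f (ltnSn n)) mulrC.
Qed.
Lemma trone N : (0 < N)%N -> tr N sone = 1.
Proof.
move=> N0; apply/polyP => i; rewrite /tr coef_poly coef1 /sone /fps_one.
case: i => [|i] /=; first by rewrite N0.
by case: ifP.
Qed.
Lemma smul1 : left_id sone smul.
Proof.
move=> f; apply: functional_extensionality => n.
rewrite (mulE _ _ (ltnSn n)) trone // mul1r /tr coef_poly ltnSn //.
Qed.
Lemma trD N f g : tr N (sadd f g) = tr N f + tr N g.
Proof. by apply/polyP => i; rewrite coefD /tr !coef_poly; case: ifP; rewrite ?addr0. Qed.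
Lemma smulDl : left_distributive smul sadd.
Proof.
move=> f g h; apply: functional_extensionality => n.
by rewrite /sadd !(mulE _ _ (ltnSn n)) trD mulrDl coefD.
Qed.
Lemma sone_neq0 : sone != szero.
Proof.
apply/eqP => /(congr1 (fun f => f 0%N)); rewrite /sone /fps_one /szero /=.
by move/eqP; rewrite oner_eq0.
Qed.

HB.instance Definition _ := GRing.Zmodule_isComNzRing.Build ser smulA smulC smul1 smulDl sone_neq0.

Lemma serD (f g : ser) n : (f + g) n = f n + g n. Proof. by []. Qed.
Lemma serN (f : ser) n : (- f) n = - f n. Proof. by []. Qed.
Lemma serB (f g : ser) n : (f - g) n = f n - g n. Proof. by []. Qed.
Lemma ser0 n : (0 : ser) n = 0. Proof. by []. Qed.
Lemma ser1 n : (1 : ser) n = (n == 0%N)%:R.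
Proof. have -> : (1 : ser) = sone by []. by rewrite /sone /fps_one; case: (n == 0%N). Qed.
Lemma serM (f g : ser) n : (f * g) n = \sum_(i < n.+1) f i * g (n - i)%N. Proof. by []. Qed.
Lemma ser_sum I (r : seq I) (P : pred I) (F : I -> ser) n :
  (\sum_(i <- r | P i) F i) n = \sum_(i <- r | P i) F i n.
Proof. by elim/big_rec2: _ => // i y1 y2 _ <-. Qed.
Lemma serE (f g : ser) : (forall n, f n = g n) -> f = g.
Proof. exact: functional_extensionality. Qed.


Lemma mulE' N (f g : ser) n : (n < N)%N -> (f * g) n = (tr N f * tr N g)`_n.
Proof. exact: mulE. Qed.

Definition eqN N (f g : ser) := forall n, (n < N)%N -> f n = g n.

Lemma mul_val a b (f g : ser) : eqN a f 0 -> eqN b g 0 -> eqN (a + b) (f * g) 0.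
Proof.
move=> Hf Hg n nab; rewrite serM ser0; apply: big1 => [[i ilt]] _ /=.
case: (ltnP i a) => ia; first by rewrite Hf ?mul0r.
by rewrite Hg ?mulr0 //; lia.
Qed.

Lemma eqN_mul N (f f' g g' : ser) : eqN N f f' -> eqN N g g' -> eqN N (f * g) (f' * g').
Proof.
move=> Hf Hg n nN; rewrite !serM; apply: eq_bigr => [[i ilt]] _ /=.
by rewrite Hf ?Hg //; lia.
Qed.

Lemma eqN_mulr N (f g : ser) : eqN N g 0 -> eqN N (f * g) 0.
Proof. by move=> Hg; have := mul_val (a := 0) (f := f) (fun n (h : (n < 0)%N) => False_ind _ (notF h)) Hg. Qed.

Lemma val_exp (u : ser) k : u 0%N = 0 -> eqN k (u ^+ k) 0.
Proof.
move=> u0; elim: k => [|k IH]; first by move=> n.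
rewrite exprS -add1n; apply: mul_val => // n; rewrite ltnS leqn0 => /eqP ->; exact: u0.
Qed.

Definition iota (p : {poly K}) : ser := fun n => p`_n.

Lemma trI N (p : {poly K}) i : (i < N)%N -> (tr N (iota p))`_i = p`_i.
Proof. by move=> iN; rewrite /tr coef_poly iN. Qed.

Lemma iota_is_zmod : zmod_morphism iota.
Proof. by move=> p q; apply: serE => n; rewrite serB /iota coefB. Qed.
Lemma iota_is_monoid : monoid_morphism iota.
Proof.
split; first by apply: serE => n; rewrite ser1 /iota coef1.
move=> p q; apply: serE => n; rewrite (mulE' _ _ (ltnSn n)).
by apply: coefM_loc => i ilen; rewrite trI.
Qed.
HB.instance Definition _ := GRing.isZmodMorphism.Build {poly K} ser iota iota_is_zmod.
HB.instance Definition _ := GRing.isMonoidMorphism.Build {poly K} ser iota iota_is_monoid.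

Definition cst (c : K) : ser := iota c%:P.
Lemma cst_is_zmod : zmod_morphism cst.
Proof. by move=> a b; rewrite /cst polyCB rmorphB. Qed.
Lemma cst_is_monoid : monoid_morphism cst.
Proof. by split; [rewrite /cst rmorph1 | move=> a b; rewrite /cst polyCM rmorphM]. Qed.
HB.instance Definition _ := GRing.isZmodMorphism.Build K ser cst cst_is_zmod.
HB.instance Definition _ := GRing.isMonoidMorphism.Build K ser cst cst_is_monoid.

Lemma cstE c n : cst c n = if n == 0%N then c else 0.
Proof. by rewrite /cst /iota coefC. Qed.

Lemma cstM c (g : ser) n : (cst c * g) n = c * g n.
Proof.
rewrite (mulE' _ _ (ltnSn n)).
have -> : tr n.+1 (cst c) = c%:P.
  by apply/polyP => i; rewrite /tr coef_poly cstE coefC; case: ifP => // /negbT; rewrite -leqNgt; case: i.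
by rewrite coefCM /tr coef_poly ltnSn.
Qed.

Definition x : ser := iota 'X.

Lemma xM (f : ser) n : (x * f) n = if n is m.+1 then f m else 0.
Proof.
case: n => [|n]; first by rewrite serM big_ord1 /x /iota coefX mul0r.
rewrite (mulE' _ _ (ltnSn n.+1)).
have -> : tr n.+2 x = 'X.
  apply/polyP => i; rewrite /tr coef_poly /x /iota coefX.
  by case: ifP => // /negbT; rewrite -leqNgt; case: i => [|[|i]].
by rewrite coefXM /= /tr coef_poly ltnW.
Qed.

Lemma xM_inj (f : ser) : x * f = 0 -> f = 0.
Proof. by move=> H; apply: serE => n; have := congr1 (fun g : ser => g n.+1) H; rewrite xM. Qed.

Definition hp (p : {poly K}) (u : ser) : ser := (map_poly cst p).[u].

Lemma hpD p q (u : ser) : hp (p + q) u = hp p u + hp q u.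
Proof. by rewrite /hp rmorphD hornerD. Qed.
Lemma hpB p q (u : ser) : hp (p - q) u = hp p u - hp q u.
Proof. by rewrite /hp rmorphB hornerD hornerN. Qed.
Lemma hpM p q (u : ser) : hp (p * q) u = hp p u * hp q u.
Proof. by rewrite /hp rmorphM hornerM. Qed.
Lemma hpC c (u : ser) : hp c%:P u = cst c.
Proof. by rewrite /hp map_polyC hornerC. Qed.
Lemma hp1 u : hp 1 u = 1.
Proof. by rewrite -polyC1 hpC rmorph1. Qed.
Lemma hpX u : hp 'X u = u.
Proof. by rewrite /hp map_polyX hornerX. Qed.
Lemma hpXn u n : hp ('X^n) u = u ^+ n.
Proof. by rewrite /hp map_polyXn hornerXn. Qed.
Lemma hp_sum N (p : {poly K}) (u : ser) : (size p <= N)%N -> hp p u = \sum_(i < N) cst p`_i * u ^+ i.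
Proof.
move=> sp; rewrite /hp (@horner_coef_wide _ N); last first.
  by apply: leq_trans sp; exact: size_poly.
by apply: eq_bigr => i _; rewrite coef_map.
Qed.

Lemma hp_x (p : {poly K}) : hp p x = iota p.
Proof.
elim/poly_ind: p => [|p c IH]; first by rewrite /hp rmorph0 horner0 rmorph0.
by rewrite hpD hpM hpC IH hpX rmorphD rmorphM.
Qed.

Lemma hp_eqN N (p q : {poly K}) (u : ser) : u 0%N = 0 -> (forall i, (i < N)%N -> p`_i = q`_i) ->
  eqN N (hp p u) (hp q u).
Proof.
move=> u0 H n nN; apply/eqP; rewrite -subr_eq0 -serB -hpB.
have := poly_take_drop N (p - q).
have -> : take_poly N (p - q) = 0.
  by apply/polyP => i; rewrite coef_take_poly coef0 coefB; case: ifP => // /H ->; rewrite subrr.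
rewrite add0r => <-; rewrite hpM hpXn.
by rewrite (@eqN_mulr N _ _ (@val_exp u N u0) n nN).
Qed.

Definition uz (u : ser) : ser := fun n => if n is 0 then 0 else u n.
Lemma uz0 u : uz u 0%N = 0. Proof. by []. Qed.
Lemma uzE u : u 0%N = 0 -> uz u = u.
Proof. by move=> u0; apply: serE => -[|n]. Qed.

Definition comp (u F : ser) : ser := fun n => hp (tr n.+1 F) (uz u) n.

Lemma compE u F N n : (n < N)%N -> comp u F n = hp (tr N F) (uz u) n.
Proof.
move=> nN; apply: (@hp_eqN n.+1) => // i iN; rewrite /tr !coef_poly iN.
by rewrite (leq_trans iN nN).
Qed.

Lemma trB N (f g : ser) : tr N (f - g) = tr N f - tr N g.
Proof. by apply/polyP => i; rewrite coefB /tr !coef_poly; case: ifP; rewrite ?subr0. Qed.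
Lemma tr1 N : (0 < N)%N -> tr N 1 = 1.
Proof. exact: trone. Qed.

Lemma comp_is_zmod u : zmod_morphism (comp u).
Proof. by move=> F G; apply: serE => n; rewrite /comp trB hpB. Qed.
Lemma comp_is_monoid u : monoid_morphism (comp u).
Proof.
split; first by apply: serE => n; rewrite /comp tr1 // hp1.
move=> F G; apply: serE => n.
rewrite /comp.
have -> : hp (tr n.+1 (F * G)) (uz u) n = hp (tr n.+1 F * tr n.+1 G) (uz u) n.
  apply: (@hp_eqN n.+1) => // i iN; rewrite /tr coef_poly iN.
  by rewrite (mulE' _ _ iN).
rewrite hpM; apply: eqN_mul (ltnSn n) => m mN; rewrite -(compE _ _ mN) //.
Qed.
HB.instance Definition _ u := GRing.isZmodMorphism.Build ser ser (comp u) (comp_is_zmod u).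
HB.instance Definition _ u := GRing.isMonoidMorphism.Build ser ser (comp u) (comp_is_monoid u).

Lemma compM u F G : comp u (F * G) = comp u F * comp u G.
Proof. exact: rmorphM. Qed.
Lemma compB u F G : comp u (F - G) = comp u F - comp u G.
Proof. exact: rmorphB. Qed.
Lemma compD u F G : comp u (F + G) = comp u F + comp u G.
Proof. exact: rmorphD. Qed.
Lemma comp1 u : comp u 1 = 1.
Proof. exact: rmorph1. Qed.
Lemma comp0 u : comp u 0 = 0.
Proof. exact: rmorph0. Qed.

Lemma comp_iota (u : ser) (p : {poly K}) : comp u (iota p) = hp p (uz u).
Proof.
apply: serE => n; rewrite /comp; apply: (@hp_eqN n.+1) => // i iN.
by rewrite trI.
Qed.
Lemma comp_x u : comp u x = uz u.
Proof. by rewrite /x comp_iota hpX. Qed.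

Lemma comp_sum u F n : comp u F n = \sum_(i < n.+1) F i * (uz u ^+ i) n.
Proof.
rewrite /comp (@hp_sum n.+1) ?size_poly // ser_sum; apply: eq_bigr => i _.
by rewrite cstM /tr coef_poly ltn_ord.
Qed.

Lemma exp_diag (u : ser) k : u 0%N = 0 -> (u ^+ k) k = u 1%N ^+ k.
Proof.
move=> u0; elim: k => [|k IH]; first by rewrite expr0 ser1 expr0.
rewrite exprS serM big_ord_recl big_ord_recl /= u0 mul0r add0r subSS subn0 IH.
rewrite big1 ?addr0 -?exprS // => [[i ilt]] _ /=.
by rewrite (@val_exp u k u0) ?mulr0 //; rewrite /bump /=; lia.
Qed.

Lemma comp_inj (u F : ser) : u 0%N = 0 -> u 1%N = 1 -> comp u F = 0 -> F = 0.
Proof.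
move=> u0 u1 H; apply: serE => n; rewrite ser0.
elim: n {-2}n (leqnn n) => [|n IH] m.
  rewrite leqn0 => /eqP ->; have := congr1 (fun g : ser => g 0%N) H.
  by rewrite comp_sum big_ord1 expr0 ser1 mulr1.
rewrite leq_eqVlt => /orP[/eqP ->|]; last by rewrite ltnS; apply: IH.
have := congr1 (fun g : ser => g n.+1) H; rewrite comp_sum big_ord_recr /= big1.
  have uz1 : uz u 1%N = 1 by exact: u1.
  by rewrite add0r exp_diag // uz1 expr1n mulr1.
by move=> [i ilt] _ /=; rewrite IH ?mul0r // -ltnS.
Qed.

Definition geom : ser := fun _ => 1.
Lemma geomE : geom * (1 - x) = 1.
Proof.
apply: serE => n; rewrite mulrBr mulr1 serB mulrC xM ser1.
by case: n => [|n]; rewrite /geom ?subr0 ?subrr.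
Qed.
Definition inv1m (w : ser) := comp w geom.
Lemma inv1mE (w : ser) : w 0%N = 0 -> inv1m w * (1 - w) = 1.
Proof.
move=> w0; have := congr1 (comp w) geomE.
by rewrite compM compB comp1 comp_x uzE.
Qed.

End Ser.
Arguments x {K}.
Arguments geom {K}.

Fixpoint bpt_eqb (a b : bpt) : bool :=
  match a, b with
  | Leaf, Leaf => true
  | Node l r, Node l' r' => bpt_eqb l l' && bpt_eqb r r'
  | _, _ => false
  end.
Lemma bpt_eqP : Equality.axiom bpt_eqb.
Proof.
elim=> [|l IHl r IHr] [|l' r'] /=; try by constructor.
apply: (iffP andP) => [[/IHl -> /IHr ->] //|[<- <-]].
by split; [apply/IHl|apply/IHr].
Qed.
HB.instance Definition _ := hasDecEq.Build bpt bpt_eqP.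

Fixpoint ht (t : bpt) : nat :=
  match t with Leaf => 0%N | Node l r => (maxn (ht l) (ht r)).+1 end.

Lemma mem_tu h t : (t \in trees_upto h) = (ht t <= h)%N.
Proof.
elim: h t => [|h IH] [|l r] //=.
rewrite in_cons /=; apply/allpairsP/idP => [[[a b] /= [ha hb [-> ->]]]|].
  by rewrite ltnS geq_max -!IH ha hb.
by rewrite ltnS geq_max -!IH => /andP[ha hb]; exists (l, r).
Qed.

Lemma uniq_tu h : uniq (trees_upto h).
Proof.
elim: h => [|h IH] //=; apply/andP; split.
  by apply/allpairsP => -[[a b] /= [_ _]].
apply: allpairs_uniq => // -[a b] [a' b'] _ _ /= [-> ->] //.
Qed.

Lemma ht_le t : (ht t <= bsize t)%N.
Proof. elim: t => [|l IHl r IHr] //=; rewrite ltnS geq_max; apply/andP; split; lia. Qed.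

Lemma BPT_perm M n : (n <= M)%N ->
  perm_eq [seq t <- trees_upto M | bsize t == n] (BPT_n n).
Proof.
move=> nM; apply: uniq_perm; rewrite ?filter_uniq ?uniq_tu // => t.
rewrite !mem_filter !mem_tu; case: eqP => //= En.
by rewrite -En ht_le (leq_trans (ht_le t)) // En.
Qed.

Lemma BPT0 : BPT_n 0 = [:: Leaf].
Proof. by []. Qed.

Lemma BPT_ne n t : (0 < n)%N -> t \in BPT_n n -> t <> Leaf.
Proof. by move=> n0; rewrite mem_filter => /andP[/eqP En _] E; move: n0; rewrite -En E. Qed.

Section Sums.
Variable V : nmodType.

Lemma sum_BPT M n (h : bpt -> V) : (n <= M)%N ->
  \sum_(t <- BPT_n n) h t = \sum_(t <- trees_upto M | bsize t == n) h t.
Proof. by move=> nM; rewrite -[RHS]big_filter; apply: perm_big; rewrite perm_sym BPT_perm. Qed.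

Lemma sum_pick (G : nat -> V) (m N : nat) :
  \sum_(i < N) (if m == (i : nat) then G i else 0) = if (m < N)%N then G m else 0.
Proof.
elim: N => [|N IH]; first by rewrite big_ord0.
rewrite big_ord_recr /= IH; have [mN|mN|->] := ltngtP m N.
- by rewrite ltnS (ltnW mN) addr0.
- by rewrite ltnS leqNgt mN add0r.
- by rewrite ltnSn add0r.
Qed.

Lemma sum_allpairs (s u : seq bpt) (F : bpt -> V) :
  \sum_(t <- [seq Node a b | a <- s, b <- u]) F t = \sum_(a <- s) \sum_(b <- u) F (Node a b).
Proof.
elim: s => [|a s IH]; first by rewrite !big_nil.
by rewrite allpairs_cons big_cat big_map IH big_cons.
Qed.

Lemma BPT_dec (h : bpt -> V) n :
  \sum_(t <- BPT_n n.+1) h t =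
  \sum_(i < n.+1) \sum_(l <- BPT_n i) \sum_(r <- BPT_n (n - i)%N) h (Node l r).
Proof.
have E : BPT_n n.+1 = [seq t <- [seq Node l r | l <- trees_upto n, r <- trees_upto n] | bsize t == n.+1] by [].
rewrite E big_filter big_mkcond sum_allpairs.
transitivity (\sum_(l <- trees_upto n) \sum_(i < n.+1) (if bsize l == i then
   \sum_(r <- trees_upto n | bsize r == (n - i)%N) h (Node l r) else 0)).
  apply eq_bigr => l _.
  rewrite (sum_pick (fun i => \sum_(r <- trees_upto n | bsize r == (n - i)%N) h (Node l r))) ltnS.
  case: leqP => ln.
    rewrite [RHS]big_mkcond; apply: eq_bigr => r _; rewrite [bsize _]/= eqSS.
    by congr (if _ then _ else _); apply/eqP/eqP; lia.
  by rewrite big1 // => r _; rewrite [bsize _]/= eqSS; case: eqP => //; lia.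
rewrite exchange_big; apply: eq_bigr => i _.
change (\sum_(l <- trees_upto n) (if bsize l == i
   then \sum_(r <- trees_upto n | bsize r == (n - i)%N) h (Node l r) else 0) =
  \sum_(l <- BPT_n i) \sum_(r <- BPT_n (n - i)%N) h (Node l r)).
rewrite (@sum_BPT n i) ?leq_ord // [RHS]big_mkcond; apply: eq_bigr => l _.
by case: eqP => // _; rewrite (@sum_BPT n) //; lia.
Qed.
End Sums.

Fixpoint plug (w : seq bool) (T : bpt) : bpt :=
  match w with
  | [::] => T
  | b :: w' => if b then Node (plug w' T) Leaf else Node Leaf (plug w' T)
  end.

Lemma plug_rcons w b T :
  plug (rcons w b) T = plug w (if b then Node T Leaf else Node Leaf T).
Proof. by elim: w => [|c w IH] //=; rewrite IH. Qed.

Lemma ins_plug T2 w a b : ins T2 a b -> ins T2 (plug w a) (plug w b).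
Proof.
elim: w => [|c w IH] //= H; case: c; [apply: ins_left | apply: ins_right]; exact: IH.
Qed.

Lemma plug_neq w T : T <> Leaf -> plug w T <> Leaf.
Proof. by case: w => [|[] w] //=. Qed.

Lemma is_branch_NN l r : l <> Leaf -> r <> Leaf -> is_branch (Node l r) = false.
Proof. by case: l => // a b _; case: r. Qed.
Lemma is_branch_LN r : r <> Leaf -> is_branch (Node Leaf r) = is_branch r.
Proof. by case: r. Qed.
Lemma is_branch_NL l : l <> Leaf -> is_branch (Node l Leaf) = is_branch l.
Proof. by case: l. Qed.

Section Unfold.
Variable R : comNzRingType.

Fixpoint Sk (k : nat) (X : seq bool -> R) (w : seq bool) : R :=
  match k with
  | 0%N => X w
  | k'.+1 => Sk k' (fun v => X (rcons v true) + X (rcons v false)) w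
  end.

Lemma Sk_ext k X X' w : (forall v, X v = X' v) -> Sk k X w = Sk k X' w.
Proof.
elim: k X X' w => [|k IH] X X' w H //=; apply: IH => v; by rewrite !H.
Qed.

Lemma Sk_lin k (a : R) X1 X2 w :
  Sk k (fun v => a * (X1 v + X2 v)) w = a * (Sk k X1 w + Sk k X2 w).
Proof.
elim: k X1 X2 w => [|k IH] X1 X2 w //=.
rewrite -IH; apply: Sk_ext => v; by rewrite -mulrDr addrACA.
Qed.

Lemma unfoldY (a : R) (c Y : seq bool -> R) :
  (forall w, Y w = a * (c w + (Y (rcons w true) + Y (rcons w false)))) ->
  forall N w, Y w = \sum_(k < N) a ^+ k.+1 * Sk k c w + a ^+ N * Sk N Y w.
Proof.
move=> HY; elim=> [|N IH] w; first by rewrite big_ord0 add0r expr0 mul1r.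
rewrite IH big_ord_recr /=.
have -> : Sk N Y w = a * (Sk N c w + Sk N.+1 Y w).
  by rewrite -Sk_lin; apply: Sk_ext.
by rewrite mulrA -exprSr mulrDr addrA.
Qed.
End Unfold.

Lemma Sk_morph (R S : comNzRingType) (f : R -> S) (fD : forall a b, f (a + b) = f a + f b)
  k (X : seq bool -> R) w :
  Sk k (fun v => f (X v)) w = f (Sk k X w).
Proof.
elim: k X w => [|k IH] X w //=; rewrite -IH; apply: Sk_ext => v; by rewrite fD.
Qed.

Section Troupe.
Variables (K : comNzRingType) (tau : bpt -> K).
Hypothesis Ht : weighted_troupe tau.

Lemma tau_split w l r : l <> Leaf -> r <> Leaf ->
  tau (plug w (Node l r)) = tau (plug w l) * tau r.
Proof.
case: l => [//|a b] _ rn; case: Ht => _ H; apply: H => //; first exact: plug_neq.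
apply: ins_plug; exact: ins_here.
Qed.

Definition cw w := tau (plug w (Node Leaf Leaf)).
Definition Fs w : ser K := fun n => if n == 0%N then 0 else \sum_(t <- BPT_n n) tau (plug w t).
Definition Ds w : ser K := fun n => if n == 0%N then 0 else
   \sum_(t <- BPT_n n) (if is_branch t then tau (plug w t) else 0).

Lemma Fs0 w : Fs w 0%N = 0. Proof. by []. Qed.
Lemma FsS w n : Fs w n.+1 = \sum_(t <- BPT_n n.+1) tau (plug w t). Proof. by []. Qed.
Lemma Ds0 w : Ds w 0%N = 0. Proof. by []. Qed.
Lemma DsS w n : Ds w n.+1 =
  \sum_(t <- BPT_n n.+1) (if is_branch t then tau (plug w t) else 0). Proof. by []. Qed.

Lemma F_term w n i : (i <= n)%N ->
  \sum_(l <- BPT_n i) \sum_(r <- BPT_n (n - i)%N) tau (plug w (Node l r)) =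
  (if i == 0%N then (if n == 0%N then cw w else Fs (rcons w false) n) else 0)
  + (if (i == n) && (0 < n)%N then Fs (rcons w true) n else 0)
  + Fs w i * Fs [::] (n - i)%N.
Proof.
case: i => [|i] ilt.
  rewrite BPT0 big_seq1 subn0 Fs0 mul0r addr0 eqxx.
  case: n ilt => [|n] _; first by rewrite BPT0 big_seq1 /cw !addr0.
  rewrite addr0 FsS; apply: eq_bigr => r _; by rewrite plug_rcons.
have [<-|ne] := eqVneq i.+1 n.
  rewrite subnn BPT0 add0r Fs0 mulr0 addr0 FsS.
  by apply: eq_bigr => l _; rewrite big_seq1 plug_rcons.
have [k Ek] : exists k, (n - i.+1)%N = k.+1 by exists (n - i.+2)%N; lia.
rewrite (_ : (i.+1 == 0%N) = false) // !add0r Ek !FsS big_distrl; apply: eq_big_seq => l lin; rewrite big_distrr.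
apply: eq_big_seq => r rin; apply: tau_split.
  exact: BPT_ne lin.
by apply: BPT_ne rin.
Qed.

Lemma D_term w n i : (i <= n)%N ->
  \sum_(l <- BPT_n i) \sum_(r <- BPT_n (n - i)%N)
     (if is_branch (Node l r) then tau (plug w (Node l r)) else 0) =
  (if i == 0%N then (if n == 0%N then cw w else Ds (rcons w false) n) else 0)
  + (if (i == n) && (0 < n)%N then Ds (rcons w true) n else 0).
Proof.
case: i => [|i] ilt.
  rewrite BPT0 big_seq1 subn0 eqxx.
  case: n ilt => [|n] _; first by rewrite BPT0 big_seq1 /cw !addr0.
  rewrite addr0 DsS; apply: eq_big_seq => r rin; rewrite plug_rcons is_branch_LN //.
  exact: BPT_ne rin.
have [<-|ne] := eqVneq i.+1 n.
  rewrite subnn BPT0 add0r ?eqxx DsS.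
  apply: eq_big_seq => l lin; rewrite big_seq1 plug_rcons is_branch_NL //.
  exact: BPT_ne lin.
have [k Ek] : exists k, (n - i.+1)%N = k.+1 by exists (n - i.+2)%N; lia.
rewrite (_ : (i.+1 == 0%N) = false) // ?add0r Ek; apply: big1_seq => l /andP[_ lin]; apply: big1_seq => r /andP[_ rin].
by rewrite is_branch_NN //; [exact: BPT_ne lin | exact: BPT_ne rin].
Qed.

Lemma sumD2 m (a b : 'I_m -> K) : \sum_(i < m) (a i + b i) = \sum_(i < m) a i + \sum_(i < m) b i.
Proof. exact: big_split. Qed.

Lemma sum_first (A : K) n : \sum_(i < n.+1) (if (i : nat) == 0%N then A else 0) = A.
Proof. by rewrite big_ord_recl eqxx big1 ?addr0. Qed.
Lemma sum_last (B : K) n (b : bool) :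
  \sum_(i < n.+1) (if ((i : nat) == n) && b then B else 0) = if b then B else 0.
Proof.
rewrite big_ord_recr eqxx /= big1 ?add0r // => i _.
by rewrite (ltn_eqF (ltn_ord i)).
Qed.

Lemma F_rec w : Fs w = x * (cst (cw w) + Fs (rcons w true) + Fs (rcons w false) + Fs w * Fs [::]).
Proof.
apply: serE => -[|n]; first by rewrite xM.
rewrite xM !serD cstE serM FsS BPT_dec.
rewrite (eq_bigr _ (fun (i : 'I_n.+1) _ => F_term w (leq_ord i))) !sumD2.
rewrite sum_first sum_last.
case: n => [|n]; first by rewrite !Fs0 !addr0.
by rewrite (_ : (n.+1 == 0%N) = false) // ltn0Sn add0r [_ + Fs (rcons w true) _]addrC.
Qed.

Lemma D_rec w : Ds w = x * (cst (cw w) + Ds (rcons w true) + Ds (rcons w false)).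
Proof.
apply: serE => -[|n]; first by rewrite xM.
rewrite xM !serD cstE DsS BPT_dec.
rewrite (eq_bigr _ (fun (i : 'I_n.+1) _ => D_term w (leq_ord i))) !sumD2.
rewrite sum_first sum_last.
case: n => [|n]; first by rewrite !Ds0 !addr0.
by rewrite add0r addrC.
Qed.

Definition Tser := Fs [::].
Definition Bser := Ds [::].

Lemma seriesT_eq : seriesT tau = Tser.
Proof. by apply: serE => -[|n]. Qed.
Lemma seriesB_eq : seriesB tau = Bser.
Proof.
apply: serE => -[|n] //; rewrite /Bser DsS /seriesB (_ : (n.+1 == 0%N) = false) //.
by rewrite /omega /Branch_n big_filter big_mkcond.
Qed.

Definition w0 : ser K := x * Tser.
Definition Gs : ser K := inv1m w0.
Definition u : ser K := x * Gs.

Lemma w00 : w0 0%N = 0. Proof. by rewrite /w0 xM. Qed.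
Lemma uE : u * (1 - x * Tser) = x.
Proof. by rewrite /u -mulrA inv1mE ?mulr1 // w00. Qed.
Lemma u0 : u 0%N = 0. Proof. by rewrite /u xM. Qed.
Lemma u1 : u 1%N = 1.
Proof. by rewrite /u xM /Gs /inv1m comp_sum big_ord1 expr0 ser1 mulr1. Qed.

Lemma F_rec' w : Fs w = u * (cst (cw w) + (Fs (rcons w true) + Fs (rcons w false))).
Proof.
set C := cst (cw w) + (Fs (rcons w true) + Fs (rcons w false)).
have E : Fs w * (1 - x * Tser) = x * C.
  rewrite mulrBr mulr1 {1}(F_rec w) /C /Tser addrA mulrDr.
  by rewrite [x * (Fs w * _)]mulrCA addrK.
have GE : Gs * (1 - x * Tser) = 1 by rewrite /Gs inv1mE // w00.
by rewrite -[Fs w]mulr1 -GE mulrCA E mulrCA /u mulrA.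
Qed.

Lemma D_rec' w : Ds w = x * (cst (cw w) + (Ds (rcons w true) + Ds (rcons w false))).
Proof. by rewrite {1}D_rec addrA. Qed.

Definition sk k := Sk k cw [::].
Definition PN N : {poly K} := \sum_(k < N) (sk k)%:P * 'X^(k.+1).

Lemma B_dec N : Bser = iota (PN N) + x ^+ N * Sk N Ds [::].
Proof.
rewrite /Bser {1}(unfoldY (a := x) (c := fun w => cst (cw w)) (Y := Ds) D_rec' N [::]).
congr (_ + _); rewrite rmorph_sum; apply: eq_bigr => k _.
by rewrite rmorphM rmorphXn (@Sk_morph K (ser K) (@cst K) (fun a b => rmorphD (@cst K) a b)) mulrC.
Qed.

Lemma hp_sumr N (F : 'I_N -> {poly K}) (a : ser K) :
  hp (\sum_(k < N) F k) a = \sum_(k < N) hp (F k) a.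
Proof.
elim: N F => [|N IH] F; first by rewrite !big_ord0 /hp rmorph0 horner0.
by rewrite !big_ord_recr hpD IH.
Qed.

Lemma T_dec N : Tser = hp (PN N) u + u ^+ N * Sk N Fs [::].
Proof.
rewrite /Tser {1}(unfoldY (a := u) (c := fun w => cst (cw w)) (Y := Fs) F_rec' N [::]).
congr (_ + _); rewrite hp_sumr; apply: eq_bigr => k _.
by rewrite hpM hpC hpXn (@Sk_morph K (ser K) (@cst K) (fun a b => rmorphD (@cst K) a b)) mulrC.
Qed.

Lemma T_comp : Tser = comp u Bser.
Proof.
apply: serE => n.
rewrite (T_dec n.+1) serD (compE _ _ (ltnSn n)) uzE ?u0 // [u ^+ _ * _]mulrC.
rewrite (@eqN_mulr _ n.+1 _ _ (@val_exp _ u n.+1 u0) n (ltnSn n)) addr0.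
apply: (@hp_eqN _ n.+1); [exact: u0| |exact: ltnSn] => i iN.
rewrite /tr coef_poly iN (B_dec n.+1) serD [x ^+ _ * _]mulrC.
rewrite (@eqN_mulr _ n.+1 _ _ (@val_exp _ x n.+1 _) i iN) ?addr0 //.
by rewrite /x /iota coefX.
Qed.

End Troupe.

Section Alg.
Variable K : comNzRingType.
Implicit Types (P : {poly {poly K}}) (a b Y f : ser K).

Definition hpa a (q : {poly K}) := hp q a.
Lemma hpa_is_zmod a : zmod_morphism (hpa a).
Proof. by move=> p q; rewrite /hpa hpB. Qed.
Lemma hpa_is_monoid a : monoid_morphism (hpa a).
Proof. by split; [rewrite /hpa hp1 | move=> p q; rewrite /hpa hpM]. Qed.
HB.instance Definition _ a := GRing.isZmodMorphism.Build {poly K} (ser K) (hpa a) (hpa_is_zmod a).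
HB.instance Definition _ a := GRing.isMonoidMorphism.Build {poly K} (ser K) (hpa a) (hpa_is_monoid a).

Definition ev2 a Y P : ser K := (map_poly (hpa a) P).[Y].

Lemma ev2D a Y P Q : ev2 a Y (P + Q) = ev2 a Y P + ev2 a Y Q.
Proof. by rewrite /ev2 rmorphD hornerD. Qed.
Lemma ev2M a Y P Q : ev2 a Y (P * Q) = ev2 a Y P * ev2 a Y Q.
Proof. by rewrite /ev2 rmorphM hornerM. Qed.
Lemma ev2X a Y : ev2 a Y 'X = Y.
Proof. by rewrite /ev2 map_polyX hornerX. Qed.
Lemma ev2C a Y p : ev2 a Y p%:P = hp p a.
Proof. by rewrite /ev2 map_polyC hornerC. Qed.
Lemma ev21 a Y : ev2 a Y 1 = 1.
Proof. by rewrite -polyC1 ev2C hp1. Qed.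
Lemma ev2_exp a Y P n : ev2 a Y (P ^+ n) = ev2 a Y P ^+ n.
Proof. by elim: n => [|n IH]; rewrite ?expr0 ?ev21 // !exprS ev2M IH. Qed.
Lemma ev2_sum a Y m (F : 'I_m -> {poly {poly K}}) :
  ev2 a Y (\sum_(i < m) F i) = \sum_(i < m) ev2 a Y (F i).
Proof.
elim: m F => [|m IH] F; first by rewrite !big_ord0 /ev2 rmorph0 horner0.
by rewrite !big_ord_recr ev2D IH.
Qed.
Lemma ev2_coef a Y P : ev2 a Y P = \sum_(i < size P) hp P`_i a * Y ^+ i.
Proof.
rewrite /ev2 (@horner_coef_wide _ (size P)); last exact: size_poly.
by apply: eq_bigr => i _; rewrite coef_map.
Qed.

Lemma fps_expE f i : fps_exp f i = f ^+ i.
Proof. by elim: i => [|i IH] //; rewrite exprS -IH. Qed.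

Lemma fps_eval_ev2 P f : fps_eval P f = ev2 x f P.
Proof.
apply: serE => n; rewrite ev2_coef ser_sum /fps_eval; apply: eq_bigr => i _.
by rewrite fps_expE hp_x.
Qed.

Lemma alg_iff f : fps_algebraic f <-> exists P, P != 0 /\ ev2 x f P = 0.
Proof.
split=> -[P [P0 E]]; exists P; split=> //.
  by apply: serE => n; rewrite -fps_eval_ev2 E.
by move=> n; rewrite fps_eval_ev2 E.
Qed.

Lemma comp_sumr (u : ser K) m (F : 'I_m -> ser K) : comp u (\sum_(i < m) F i) = \sum_(i < m) comp u (F i).
Proof.
elim: m F => [|m IH] F; first by rewrite !big_ord0 comp0.
by rewrite !big_ord_recr compD IH.
Qed.
Lemma comp_exp (u F : ser K) n : comp u (F ^+ n) = comp u F ^+ n.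
Proof. by elim: n => [|n IH]; rewrite ?expr0 ?comp1 // !exprS compM IH. Qed.

Lemma comp_ev2 (u F : ser K) P : comp u (ev2 x F P) = ev2 (uz u) (comp u F) P.
Proof.
rewrite !ev2_coef comp_sumr; apply: eq_bigr => i _.
by rewrite compM comp_exp hp_x comp_iota.
Qed.

Definition szc P (i : nat) := size P`_i.
Definition dP P := (\max_(i < size P) szc P i)%N.+1.
Definition Zs (s : K) : {poly {poly K}} := 1 + (s%:P * 'X)%:P * 'X.
Definition Qs (s : K) P : {poly {poly K}} :=
  \sum_(i < size P) \sum_(j < dP P)
     ((P`_i)`_j)%:P%:P * ('X%:P) ^+ j * Zs s ^+ (dP P - j) * 'X ^+ i.

Lemma size_dP P (i : 'I_(size P)) : leq (size P`_i) (dP P).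
Proof. by rewrite /dP ltnW // ltnS (leq_bigmax (F := fun i : 'I_(size P) => szc P i)). Qed.

Lemma ev2Q s P a b Y : a = b * (1 + cst s * a * Y) ->
  ev2 a Y (Qs s P) = (1 + cst s * a * Y) ^+ dP P * ev2 b Y P.
Proof.
set z := 1 + cst s * a * Y => ab.
have ez : ev2 a Y (Zs s) = z by rewrite /Zs ev2D ev21 ev2M ev2C ev2X hpM hpC hpX.
rewrite /Qs ev2_sum (ev2_coef b) mulr_sumr; apply: eq_bigr => i _.
rewrite ev2_sum (@hp_sum _ (dP P)) ?size_dP // mulr_suml mulr_sumr; apply: eq_bigr => j _.
rewrite !ev2M !ev2_exp ev2X ez !ev2C hpC hpX.
have -> : a ^+ j = b ^+ j * z ^+ j by rewrite {1}ab exprMn.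
have -> : z ^+ dP P = z ^+ j * z ^+ (dP P - j) by rewrite -exprD subnKC // ltnW.
ring.
Qed.

Definition psi (Q : {poly {poly K}}) : {poly K} := map_poly (horner_eval 0) Q.
Lemma psiM Q1 Q2 : psi (Q1 * Q2) = psi Q1 * psi Q2. Proof. exact: rmorphM. Qed.
Lemma psiD Q1 Q2 : psi (Q1 + Q2) = psi Q1 + psi Q2. Proof. exact: rmorphD. Qed.
Lemma psi1 : psi 1 = 1. Proof. exact: rmorph1. Qed.
Lemma psi0 : psi 0 = 0. Proof. exact: rmorph0. Qed.
Lemma psiXn Q n : psi (Q ^+ n) = psi Q ^+ n. Proof. exact: rmorphXn. Qed.
Lemma psiC (p : {poly K}) : psi p%:P = (p.[0])%:P. Proof. by rewrite /psi map_polyC. Qed.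
Lemma psiX : psi 'X = 'X. Proof. by rewrite /psi map_polyX. Qed.
Lemma psi_sum m (F : 'I_m -> {poly {poly K}}) : psi (\sum_(i < m) F i) = \sum_(i < m) psi (F i).
Proof.
elim: m F => [|m IH] F; first by rewrite !big_ord0 psi0.
by rewrite !big_ord_recr psiD IH.
Qed.

Lemma psi_term s (c : K) j k i :
  psi (c%:P%:P * ('X%:P) ^+ j * Zs s ^+ k * 'X ^+ i) = (c * 0 ^+ j)%:P * 'X ^+ i.
Proof.
rewrite !psiM !psiXn !psiC psiX hornerC hornerX.
rewrite /Zs psiD psi1 psiM psiC psiX.
by rewrite hornerM hornerX mulr0 mul0r addr0 expr1n mulr1 polyCM polyC_exp.
Qed.

Lemma Qs_neq0 s P i0 : (P`_i0)`_0 != 0 -> Qs s P != 0.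
Proof.
move=> Pi0; have i0lt : (i0 < size P)%N.
  by rewrite ltnNge; apply/negP => /(nth_default 0) E; move: Pi0; rewrite E coef0 eqxx.
apply/negP => /eqP Q0.
have H1 : forall i : 'I_(size P),
  (psi (\sum_(j < dP P) ((P`_i)`_j)%:P%:P * ('X%:P) ^+ j * Zs s ^+ (dP P - j) * 'X ^+ i))`_i0
  = if i0 == (i : nat) then (P`_i)`_0 else 0.
  have dPS : dP P = (dP P).-1.+1 by [].
  move=> i; rewrite psi_sum coef_sum dPS big_ord_recl big1 ?addr0 => [|j _].
    by rewrite psi_term expr0 mulr1 coefCM coefXn; case: eqP; rewrite ?mulr1 ?mulr0.
  by rewrite psi_term expr0n /= mulr0 coefCM mul0r.
have := congr1 (fun Q => (psi Q)`_i0) Q0.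
rewrite psi0 coef0 /Qs psi_sum coef_sum (eq_bigr _ (fun i _ => H1 i)).
rewrite (sum_pick (fun i => (P`_i)`_0)) i0lt => /eqP.
by rewrite (negbTE Pi0).
Qed.
Lemma wlog0 f P : P != 0 -> ev2 x f P = 0 ->
  exists P' i0, ev2 x f P' = 0 /\ (P'`_i0)`_0 != 0.
Proof.
move=> P0 E.
suff H : forall m P, (exists i, P`_i != 0 /\ leq (size P`_i) m) -> ev2 x f P = 0 ->
    exists P' i0, ev2 x f P' = 0 /\ (P'`_i0)`_0 != 0.
  apply: (H (size P`_(size P).-1) P) => //; exists (size P).-1; split => //.
  by rewrite -lead_coefE lead_coef_eq0.
elim=> [|m IH] Q [i [Qi sz]] EQ.
  by move: sz; rewrite leqn0 size_poly_eq0 (negbTE Qi).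
case: (pselect (exists i0, (Q`_i0)`_0 != 0)) => [[i0 H]|nH]; first by exists Q, i0.
have c0 : forall j, (Q`_j)`_0 = 0.
  move=> j; apply/eqP; apply/negPn/negP => H; apply: nH; by exists j.
set Q' := map_poly (drop_poly 1) Q.
have dq : forall q : {poly K}, q`_0 = 0 -> q = drop_poly 1 q * 'X.
  move=> q q0; rewrite -[LHS](poly_take_drop 1) [take_poly 1 q](_ : _ = 0) ?add0r ?expr1 //.
  by apply/polyP => k; rewrite coef_take_poly coef0; case: k => [|k] //; rewrite q0.
have EQ' : Q = ('X%:P) * Q'.
  apply/polyP => j; rewrite coefCM /Q' coef_map_id0 ?drop_poly0r // mulrC -dq //.
have E' : ev2 x f Q' = 0.
  by apply: xM_inj; move: EQ; rewrite {1}EQ' ev2M ev2C hpX.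
apply: (IH Q') => //; exists i; split.
  rewrite /Q' coef_map_id0 ?drop_poly0r //; apply: contra Qi => /eqP D.
  by rewrite (dq _ (c0 i)) D mul0r.
by rewrite /Q' coef_map_id0 ?drop_poly0r // size_drop_poly leq_subLR add1n.
Qed.

End Alg.

Theorem corollary5p2 (K : comNzRingType) (tau : bpt -> K) :
  weighted_troupe tau ->
  (fps_algebraic (seriesB tau) <-> fps_algebraic (seriesT tau)).
Proof.
move=> Ht; rewrite !alg_iff seriesB_eq seriesT_eq.
have TC := T_comp Ht.
have U0 := u0 tau; have U1 := u1 tau; have UE := uE tau.
move: TC U0 U1 UE; set T := Tser tau; set B := Bser tau; set U := u tau => TC U0 U1 UE.
have cstN1 : cst (-1) = -1 :> ser K by exact: rmorphN1.
have cst1 : cst 1 = 1 :> ser K by exact: rmorph1.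
split.
- case=> P [P0 E]; have [P' [i0 [E' Pi0]]] := wlog0 P0 E.
  exists (Qs (-1) P'); split; first exact: Qs_neq0 Pi0.
  have E2 : ev2 U T P' = 0.
    by have := congr1 (comp U) E'; rewrite comp_ev2 comp0 uzE // -TC.
  rewrite (@ev2Q K (-1) P' x U T) ?E2 ?mulr0 //.
  by rewrite cstN1 mulN1r mulNr UE.
- case=> P [P0 E]; have [P' [i0 [E' Pi0]]] := wlog0 P0 E.
  exists (Qs 1 P'); split; first exact: Qs_neq0 Pi0.
  apply: (comp_inj U0 U1).
  rewrite comp_ev2 uzE // -TC (@ev2Q K 1 P' U x T) ?E' ?mulr0 ?comp0 //.
  have H2 : U = x + U * (x * T) by rewrite -{1}UE mulrBr mulr1 subrK.
  rewrite cst1 mul1r {1}H2; ring.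
Qed.
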